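(* Let $f:\mathbb{R}^n\times\mathbb{R}^m\to\mathbb{R}$ and $h:\mathbb{R}^m\to\mathbb{R}$. Let $U\subseteq\mathbb{R}^n$ be open and let $y:U\to\mathbb{R}^m$ satisfy $y(x)\in\operatorname{argmin}_{u\in\mathbb{R}^m} f(x,u)$ subject to $h(u)=0$ for every $x\in U$. Fix $x_0\in U$, write $y_0=y(x_0)$, and assume $f$ is twice continuously differentiable near $(x_0,y_0)$, $h$ is twice continuously differentiable near $y_0$, $y$ is continuous at $x_0$, and $D_Y h(y_0)\neq 0$. Let $$a=(D_Y h(y_0))^\top\in\mathbb{R}^m,\quad B=D^2_{XY}f(x_0,y_0)\in\mathbb{R}^{m\times n},\quad \lambda=\Big(\tfrac{\partial h}{\partial y_i}(y_0)\Big)^{-1}\tfrac{\partial f}{\partial y_i}(x_0,y_0)$$ for any index $i$ with $\frac{\partial h}{\partial y_i}(y_0)\neq 0$ (this value does not depend on the choice of $i$), and $H=D^2_{YY}f(x_0,y_0)-\lambda D^2_{YY}h(y_0)$. If $H$ is non-singular and $a^\top H^{-1}a\neq 0$, then $y$ is differentiable at $x_0$ and $$Dy(x_0)=\left(\frac{H^{-1}aa^\top H^{-1}}{a^\top H^{-1}a}-H^{-1}\right)B.$$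
   Context: Derivative conventions: Jacobians $Dg$ of $g:\mathbb{R}^n\to\mathbb{R}^k$ are $k\times n$ matrices; for scalar-valued functions they are row vectors. $D_X, D_Y$ are partial Jacobians with respect to the first/second argument; $D^2_{YY} f = D_Y (D_Y f)^{\top}$, $D^2_{XY} f = D_X (D_Y f)^{\top}\in\mathbb{R}^{m\times n}$. *)

(* Defs.v *)
From Stdlib Require Import Reals.
From mathcomp Require Import ssreflect ssrfun ssrbool eqtype ssrnat seq fintype bigop.
Set Implicit Arguments. Unset Strict Implicit.

Local Open Scope R_scope.

Definition vec (n : nat) := 'I_n -> R.
Definition mat (q p : nat) := 'I_q -> 'I_p -> R.

Definition rsum (n : nat) (F : 'I_n -> R) : R := \big[Rplus/0]_(i < n) F i.

Definition vadd n (u v : vec n) : vec n := fun i => u i + v i.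
Definition vsub n (u v : vec n) : vec n := fun i => u i - v i.
Definition dot n (u v : vec n) : R := rsum (fun i => u i * v i).
Definition vnorm n (u : vec n) : R := sqrt (rsum (fun i => u i * u i)).
Definition vdist n (u v : vec n) : R := vnorm (vsub u v).

Definition mv q p (L : mat q p) (u : vec p) : vec q := fun i => rsum (fun j => L i j * u j).
Definition vm q p (u : vec q) (L : mat q p) : vec p := fun j => rsum (fun i => u i * L i j).
Definition mm q p r (A : mat q p) (B : mat p r) : mat q r :=
  fun i k => rsum (fun j => A i j * B j k).
Definition idm (n : nat) : mat n n := fun i j => if i == j then 1 else 0.

(* Two-sided inverse: H is non-singular iff such an Hinv exists. *)
Definition is_inverse n (H Hinv : mat n n) : Prop := mm H Hinv = @idm n /\ mm Hinv H = @idm n.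

Definition has_deriv p q (g : vec p -> vec q) (z : vec p) (L : mat q p) : Prop :=
  forall eps, 0 < eps -> exists delta, 0 < delta /\
    forall k : vec p, vnorm k < delta ->
      vnorm (vsub (vsub (g (vadd z k)) (g z)) (mv L k)) <= eps * vnorm k.

(* Frechet derivative of a scalar function g : R^p -> R at z; the Jacobian
   (a row vector) is stored as the vector v. *)
Definition has_grad p (g : vec p -> R) (z : vec p) (v : vec p) : Prop :=
  has_deriv (fun w => fun _ : 'I_1 => g w) z (fun _ j => v j).

Definition cont_at p q (g : vec p -> vec q) (z : vec p) : Prop :=
  forall eps, 0 < eps -> exists delta, 0 < delta /\
    forall w, vdist w z < delta -> vdist (g w) (g z) < eps.

(* continuity of a matrix-valued function (entrywise, equivalently in any norm) *)
Definition mcont_at p q r (G : vec p -> mat q r) (z : vec p) : Prop :=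
  forall i j, cont_at (fun w => fun _ : 'I_1 => G w i j) z.

Definition C2_near_with p (g : vec p -> R) (Dg : vec p -> vec p)
    (D2g : vec p -> mat p p) (z0 : vec p) : Prop :=
  exists r, 0 < r /\ forall z, vdist z z0 < r ->
    has_grad g z (Dg z) /\ has_deriv Dg z (D2g z) /\ mcont_at D2g z.

Definition is_open n (U : vec n -> Prop) : Prop :=
  forall x, U x -> exists r, 0 < r /\ forall z, vdist z x < r -> U z.

Definition vjoin n m (x : vec n) (u : vec m) : vec (n + m) :=
  fun k => match split k with inl i => x i | inr j => u j end.
Definition uncurry_vec n m (f : vec n -> vec m -> R) : vec (n + m) -> R :=
  fun z => f (fun i => z (lshift m i)) (fun j => z (rshift n j)).

Definition is_constrained_argmin n m (f : vec n -> vec m -> R) (h : vec m -> R)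
    (x : vec n) (u0 : vec m) : Prop :=
  h u0 = 0 /\ forall u, h u = 0 -> f x u0 <= f x u.

(* Main.v *)
From HB Require Import structures.
Require Import Defs.
From Stdlib Require Import Reals Lra FunctionalExtensionality Ranalysis5.
From mathcomp Require Import ssreflect ssrfun ssrbool eqtype ssrnat seq fintype bigop.
Local Open Scope R_scope.

Set Implicit Arguments. Unset Strict Implicit.

Lemma Rplus_assoc' : associative Rplus. Proof. move=> *; ring. Qed.
HB.instance Definition _ := Monoid.isComLaw.Build R 0 Rplus Rplus_assoc' Rplus_comm Rplus_0_l.
HB.instance Definition _ := Monoid.isMulLaw.Build R 0 Rmult Rmult_0_l Rmult_0_r.
Lemma Rdl : left_distributive Rmult Rplus. Proof. move=> *; ring. Qed.
Lemma Rdr : right_distributive Rmult Rplus. Proof. move=> *; ring. Qed.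
HB.instance Definition _ := Monoid.isAddLaw.Build R Rmult Rplus Rdl Rdr.

Definition N1 n (u : vec n) : R := rsum (fun i => Rabs (u i)).
Definition MN q p (A : mat q p) : R := rsum (fun i => rsum (fun j => Rabs (A i j))).

Lemma rsum_ext n (F G : 'I_n -> R) : (forall i, F i = G i) -> rsum F = rsum G.
Proof. move=> H; rewrite /rsum; apply: eq_bigr => i _; exact: H. Qed.
Lemma rsumD n (F G : 'I_n -> R) : rsum (fun i => F i + G i) = rsum F + rsum G.
Proof. by rewrite /rsum big_split. Qed.
Lemma rsumZ n c (F : 'I_n -> R) : rsum (fun i => c * F i) = c * rsum F.
Proof. by rewrite /rsum big_distrr. Qed.
Lemma rsumZr n c (F : 'I_n -> R) : rsum (fun i => F i * c) = rsum F * c.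
Proof. rewrite Rmult_comm -rsumZ; apply: rsum_ext => i; ring. Qed.
Lemma rsum0 n : rsum (fun _ : 'I_n => 0) = 0.
Proof. by rewrite /rsum big1_eq. Qed.
Lemma rsumN n (F : 'I_n -> R) : rsum (fun i => - F i) = - rsum F.
Proof. have -> : - rsum F = -1 * rsum F by ring. rewrite -rsumZ; apply: rsum_ext => i; ring. Qed.
Lemma rsumB n (F G : 'I_n -> R) : rsum (fun i => F i - G i) = rsum F - rsum G.
Proof. by rewrite /Rminus -rsumN -rsumD. Qed.
Lemma rsum_le n (F G : 'I_n -> R) : (forall i, F i <= G i) -> rsum F <= rsum G.
Proof.
move=> H; rewrite /rsum; apply: (big_ind2 (fun a b => a <= b)).
- lra.
- move=> *; lra.
- move=> i _; exact: H.
Qed.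
Lemma rsum_ge0 n (F : 'I_n -> R) : (forall i, 0 <= F i) -> 0 <= rsum F.
Proof. move=> H; rewrite -(rsum0 n); exact: rsum_le. Qed.
Lemma Rabs_rsum n (F : 'I_n -> R) : Rabs (rsum F) <= rsum (fun i => Rabs (F i)).
Proof.
rewrite /rsum; apply: (big_ind2 (fun a b => Rabs a <= b)).
- rewrite Rabs_R0; lra.
- move=> a b c d h1 h2; apply: Rle_trans (Rabs_triang _ _) _; lra.
- move=> i _; lra.
Qed.
Lemma rsum_term n (F : 'I_n -> R) j : (forall i, 0 <= F i) -> F j <= rsum F.
Proof.
move=> H; rewrite /rsum (bigD1 j) //=.
set S := bigop _ _ _.
have : 0 <= S.
  apply: (big_ind (fun a => 0 <= a)); [lra | move=> *; lra | move=> i _; exact: H].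
lra.
Qed.
Lemma rsum_swap n m (F : 'I_n -> 'I_m -> R) :
  rsum (fun i => rsum (fun j => F i j)) = rsum (fun j => rsum (fun i => F i j)).
Proof. by rewrite /rsum exchange_big. Qed.
Lemma rsum_split n m (F : 'I_(n + m) -> R) :
  rsum F = rsum (fun i => F (lshift m i)) + rsum (fun j => F (rshift n j)).
Proof. by rewrite /rsum big_split_ord. Qed.
Lemma rsum_const n c : rsum (fun _ : 'I_n => c) = INR n * c.
Proof.
rewrite /rsum; elim: n => [|n IH]; first by rewrite big_ord0 /=; ring.
rewrite big_ord_recr S_INR /= IH; ring.
Qed.
Lemma rsum_delta n (u : 'I_n -> R) i : rsum (fun j => (if j == i then 1 else 0) * u j) = u i.
Proof.
rewrite /rsum (bigD1 i) //= eqxx big1 => [|j /negbTE ->]; ring.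
Qed.
Lemma rsum_delta' n (u : 'I_n -> R) i : rsum (fun j => u j * (if i == j then 1 else 0)) = u i.
Proof.
rewrite -(rsum_delta u i); apply: rsum_ext => j; rewrite eq_sym; ring.
Qed.

Lemma vjoin_l n m (x : vec n) (u : vec m) i : vjoin x u (lshift m i) = x i.
Proof. by rewrite /vjoin (unsplitK (inl _ i)). Qed.
Lemma vjoin_r n m (x : vec n) (u : vec m) j : vjoin x u (rshift n j) = u j.
Proof. by rewrite /vjoin (unsplitK (inr _ j)). Qed.

Lemma N1_ge0 n (u : vec n) : 0 <= N1 u.
Proof. apply: rsum_ge0 => i; exact: Rabs_pos. Qed.
Lemma abs_le_N1 n (u : vec n) i : Rabs (u i) <= N1 u.
Proof. rewrite /N1; apply: (rsum_term (F := fun i => Rabs (u i))) => j; exact: Rabs_pos. Qed.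
Lemma vnorm_ge0 n (u : vec n) : 0 <= vnorm u.
Proof. exact: sqrt_pos. Qed.
Lemma abs_le_vnorm n (u : vec n) i : Rabs (u i) <= vnorm u.
Proof.
rewrite /vnorm -sqrt_Rsqr_abs; apply: sqrt_le_1_alt.
rewrite /Rsqr; apply: (rsum_term (F := fun i => u i * u i)) => j; nra.
Qed.
Lemma sq_sum_le n (F : 'I_n -> R) : (forall i, 0 <= F i) ->
  rsum (fun i => F i * F i) <= rsum F * rsum F.
Proof.
rewrite /rsum; elim: n F => [|n IH] F H; first by rewrite !big_ord0; lra.
rewrite !big_ord_recr /=.
have h1 := IH (fun i => F (widen_ord (leqnSn n) i)) (fun i => H _).
have h2 : 0 <= \big[Rplus/0]_(i < n) F (widen_ord (leqnSn n) i).
  apply: (big_ind (fun a => 0 <= a)); [lra | move=> *; lra | move=> i _; exact: H].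
have aux : forall A S a, A <= S * S -> 0 <= S -> 0 <= a -> A + a * a <= (S + a) * (S + a).
  move=> A S a *; nra.
exact: aux.
Qed.
Lemma vnorm_le_N1 n (u : vec n) : vnorm u <= N1 u.
Proof.
rewrite /vnorm; rewrite -(sqrt_square (N1 u)); last exact: N1_ge0.
apply: sqrt_le_1_alt.
have h := sq_sum_le (F := fun i => Rabs (u i)) (fun i => Rabs_pos _).
apply: Rle_trans h; apply: rsum_le => i; rewrite -Rabs_mult Rabs_right //; nra.
Qed.
Lemma N1_le_vnorm n (u : vec n) : N1 u <= INR n * vnorm u.
Proof. rewrite -rsum_const; apply: rsum_le => i; exact: abs_le_vnorm. Qed.
Lemma vnorm1 (r : R) : vnorm (fun _ : 'I_1 => r) = Rabs r.
Proof. by rewrite /vnorm /rsum big_ord1 sqrt_Rsqr_abs. Qed.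
Lemma N1_join n m (k : vec n) (d : vec m) : N1 (vjoin k d) = N1 k + N1 d.
Proof.
rewrite /N1 rsum_split; congr (_ + _); apply: rsum_ext => i;
  by rewrite ?vjoin_l ?vjoin_r.
Qed.
Lemma N1_mv q p (A : mat q p) u : N1 (mv A u) <= MN A * N1 u.
Proof.
rewrite /N1 /MN /mv -rsumZr; apply: rsum_le => i.
apply: Rle_trans (Rabs_rsum _) _; rewrite -rsumZr; apply: rsum_le => j.
rewrite Rabs_mult; apply: Rmult_le_compat_l; [exact: Rabs_pos | exact: abs_le_N1].
Qed.
Lemma abs_mv q p (A : mat q p) u i : Rabs (mv A u i) <= MN A * N1 u.
Proof. apply: Rle_trans (N1_mv A u); exact: abs_le_N1. Qed.
Lemma abs_dot n (a u : vec n) : Rabs (dot a u) <= N1 a * N1 u.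
Proof.
rewrite /dot /N1 -rsumZr; apply: Rle_trans (Rabs_rsum _) _; apply: rsum_le => j.
rewrite Rabs_mult; apply: Rmult_le_compat_l; [exact: Rabs_pos | exact: abs_le_N1].
Qed.
Lemma MN_ge0 q p (A : mat q p) : 0 <= MN A.
Proof. apply: rsum_ge0 => i; apply: rsum_ge0 => j; exact: Rabs_pos. Qed.
Lemma N1_tri n (w u v : vec n) : (forall i, w i = u i + v i) -> N1 w <= N1 u + N1 v.
Proof.
move=> H; rewrite /N1 -rsumD; apply: rsum_le => i; rewrite H; exact: Rabs_triang.
Qed.
Lemma N1_scale n c (u : vec n) : N1 (fun i => c * u i) = Rabs c * N1 u.
Proof. rewrite /N1 -rsumZ; apply: rsum_ext => i; exact: Rabs_mult. Qed.
Lemma N1_ext n (u v : vec n) : (forall i, u i = v i) -> N1 u = N1 v.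
Proof. move=> H; apply: rsum_ext => i; by rewrite H. Qed.
Lemma vnorm_ext n (u v : vec n) : (forall i, u i = v i) -> vnorm u = vnorm v.
Proof. move=> H; rewrite /vnorm; congr sqrt; apply: rsum_ext => i; by rewrite H. Qed.
Lemma Rabs_le_between x b : Rabs x <= b -> - b <= x /\ x <= b.
Proof. move=> H; have := Rle_abs x; have := Rle_abs (- x); rewrite Rabs_Ropp; lra. Qed.


Lemma grad_bound p (g : vec p -> R) z v : has_grad g z v ->
  forall eps, 0 < eps -> exists delta, 0 < delta /\ forall k, vnorm k < delta ->
    Rabs (g (vadd z k) - g z - dot v k) <= eps * vnorm k.
Proof.
move=> H eps he; have [d [hd Hd]] := H eps he; exists d; split => // k hk.
have := Hd k hk; rewrite (vnorm_ext (v := fun _ : 'I_1 => g (vadd z k) - g z - dot v k)) ?vnorm1 //.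
Qed.

Lemma deriv_bound p q (g : vec p -> vec q) z L : has_deriv g z L ->
  forall eps, 0 < eps -> exists delta, 0 < delta /\ forall k, vnorm k < delta ->
    forall i, Rabs (g (vadd z k) i - g z i - mv L k i) <= eps * vnorm k.
Proof.
move=> H eps he; have [d [hd Hd]] := H eps he; exists d; split => // k hk i.
apply: Rle_trans (Hd k hk); exact: (abs_le_vnorm (vsub (vsub (g (vadd z k)) (g z)) (mv L k)) i).
Qed.

Lemma cont_lip (f : R -> R) a C delta : 0 < delta -> 0 <= C ->
  (forall a', Rabs (a' - a) < delta -> Rabs (f a' - f a) <= C * Rabs (a' - a)) ->
  continuity_pt f a.
Proof.
move=> hd hC H eps he.
exists (Rmin delta (eps / (C + 1))); split.
  apply: Rmin_pos => //; apply: Rdiv_lt_0_compat; lra.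
move=> x [_ hx]; rewrite /= /R_dist in hx *.
have h1 := Rmin_l delta (eps / (C + 1)); have h2 := Rmin_r delta (eps / (C + 1)).
have := H x ltac:(lra).
have h3 : (eps / (C + 1)) * (C + 1) = eps by field; lra.
have h4 : 0 <= Rabs (x - a) := Rabs_pos _.
have h5 : C * Rabs (x - a) <= C * (eps / (C + 1)) by apply: Rmult_le_compat_l; lra.
nra.
Qed.

Definition ev m (i : 'I_m) : vec m := fun l => if i == l then 1 else 0.
Lemma dot_ev m (a : vec m) i : dot a (ev i) = a i.
Proof. exact: rsum_delta'. Qed.
Lemma dot_lin m (a u w : vec m) al be :
  dot a (fun l => al * u l + be * w l) = al * dot a u + be * dot a w.
Proof. rewrite /dot -!rsumZ -rsumD; apply: rsum_ext => i; ring. Qed.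
Lemma N1_ev m (i : 'I_m) : N1 (ev i) = 1.
Proof.
rewrite /N1 -(rsum_delta' (fun _ => 1) i); apply: rsum_ext => j; rewrite /ev.
case: (i == j); rewrite ?Rabs_R1 ?Rabs_R0; ring.
Qed.
Lemma vadd_vsub n (x k : vec n) : vsub (vadd x k) x = k.
Proof. apply: functional_extensionality => i; rewrite /vsub /vadd; ring. Qed.

Lemma lag_dir (m : nat) (G h : vec m -> R) (Dh : vec m -> vec m) (u0 q : vec m) (r0 : R) (i0 : 'I_m)
  (hr0 : 0 < r0) (hu0 : h u0 = 0) (hmin : forall u, h u = 0 -> G u0 <= G u)
  (hG : has_grad G u0 q) (hh0 : has_grad h u0 (Dh u0))
  (hh : forall w, N1 w < r0 -> has_grad h (vadd u0 w) (Dh (vadd u0 w)))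
  (hb : Dh u0 i0 <> 0) v : dot (Dh u0) v = 0 -> 0 <= dot q v.
Proof.
set b := Dh u0.
move=> hbv; case: (Rle_lt_dec 0 (dot q v)) => // hneg; exfalso.
set ga := - dot q v. have hga : 0 < ga by rewrite /ga; lra.
set be := Rabs (b i0). have hbe : 0 < be by apply: Rabs_pos_lt.
set V := N1 v. have hV : 0 <= V := N1_ge0 v.
set Q := Rabs (q i0). have hQ : 0 <= Q := Rabs_pos _.
set eta := ga / (4 * (Q + 1)).
have heta : eta * (4 * (Q + 1)) = ga by rewrite /eta; field; lra.
have heta0 : 0 < eta by rewrite /eta; apply: Rdiv_lt_0_compat; lra.
set K := V + eta + 1. have hK : 0 < K by rewrite /K; lra.
set eps' := ga / (4 * K).
have heps' : eps' * (4 * K) = ga by rewrite /eps'; field; lra.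
have heps'0 : 0 < eps' by rewrite /eps'; apply: Rdiv_lt_0_compat; lra.
set eps := eta * be / (2 * K).
have heps : eps * (2 * K) = eta * be by rewrite /eps; field; lra.
have heps0 : 0 < eps by rewrite /eps; apply: Rdiv_lt_0_compat; nra.
have [dg [hdg Hdg]] := grad_bound hG heps'0.
have [dh [hdh Hdh]] := grad_bound hh0 heps0.
set mn := Rmin dg (Rmin dh r0).
have hmn : 0 < mn by rewrite /mn; apply: Rmin_pos => //; apply: Rmin_pos.
have hmn1 := Rmin_l dg (Rmin dh r0). have hmn2 := Rmin_r dg (Rmin dh r0).
have hmn3 := Rmin_l dh r0. have hmn4 := Rmin_r dh r0.
fold mn in hmn1, hmn2.
set t := mn / (2 * K).
have ht : t * (2 * K) = mn by rewrite /t; field; lra.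
have ht0 : 0 < t by rewrite /t; apply: Rdiv_lt_0_compat; lra.
have htK : t * (V + eta) < mn.
  have : t * (V + eta) < t * K by apply: Rmult_lt_compat_l => //; rewrite /K; lra.
  nra.
set w := fun s : R => fun l => t * v l + s * ev i0 l.
have N1w : forall s, N1 (w s) <= t * V + Rabs s.
  move=> s; apply: Rle_trans (N1_tri (u := fun l => t * v l) (v := fun l => s * ev i0 l) _) _ => //.
  rewrite !N1_scale N1_ev (Rabs_right t); last lra. have -> : N1 v = V by []. lra.
have vnw : forall s, Rabs s <= eta * t -> vnorm (w s) <= t * (V + eta).
  move=> s hs; apply: Rle_trans (vnorm_le_N1 _) _; have := N1w s; nra.
have dbw : forall s, dot b (w s) = s * b i0.
  by move=> s; rewrite /w dot_lin hbv dot_ev; ring.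
have dqw : forall s, dot q (w s) = - t * ga + s * q i0.
  by move=> s; rewrite /w dot_lin dot_ev /ga; ring.
set phi := fun s => h (vadd u0 (w s)).
have hend : forall s, Rabs s <= eta * t -> Rabs (phi s - s * b i0) <= eps * (t * (V + eta)).
  move=> s hs; have hv := vnw s hs.
  have := Hdh (w s) ltac:(lra); rewrite hu0 dbw Rminus_0_r => H1.
  apply: Rle_trans H1 _; apply: Rmult_le_compat_l; lra.
have hsmall : eps * (t * (V + eta)) < eta * t * be / 2 + 0.
  have : eps * (V + eta) < eps * K by apply: Rmult_lt_compat_l => //; rewrite /K; lra.
  have : eps * K = eta * be / 2 by lra.
  move=> h1 h2.
  have : t * (eps * (V + eta)) < t * (eta * be / 2) by apply: Rmult_lt_compat_l => //; lra.
  lra.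
have het : 0 < eta * t by apply: Rmult_lt_0_compat.
have hpos : Rabs (eta * t) <= eta * t by rewrite Rabs_right; lra.
have hneg' : Rabs (- (eta * t)) <= eta * t by rewrite Rabs_Ropp Rabs_right; lra.
have e1 := hend _ hpos. have e2 := hend _ hneg'.
have hcont : forall a, - (eta * t) <= a <= eta * t -> continuity_pt phi a.
  move=> a ha.
  have hNa : N1 (w a) < r0.
    have := N1w a; have : Rabs a <= eta * t by apply: Rabs_le; lra. lra.
  have hg := hh _ hNa.
  have [d1 [hd1 Hd1]] := grad_bound hg Rlt_0_1.
  set p := vadd u0 (w a).
  apply: (@cont_lip phi a (N1 (Dh p) + 1) d1) => //.
    have := N1_ge0 (Dh p); lra.
  move=> a' ha'.
  set k := fun l => (a' - a) * ev i0 l.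
  have hk : vnorm k <= Rabs (a' - a).
    apply: Rle_trans (vnorm_le_N1 _) _; rewrite /k N1_scale N1_ev; lra.
  have hpk : vadd p k = vadd u0 (w a').
    apply: functional_extensionality => l; rewrite /p /k /vadd /w; ring.
  have := Hd1 k ltac:(lra); rewrite hpk => H1.
  have H2 := abs_dot (Dh p) k.
  have hNk : N1 k = Rabs (a' - a) by rewrite /k N1_scale N1_ev; ring.
  rewrite /phi -/p.
  have H3 : Rabs (h (vadd u0 (w a')) - h p) <= Rabs (dot (Dh p) k) + 1 * vnorm k.
    have := Rabs_triang (h (vadd u0 (w a')) - h p - dot (Dh p) k) (dot (Dh p) k).
    have -> : h (vadd u0 (w a')) - h p - dot (Dh p) k + dot (Dh p) k = h (vadd u0 (w a')) - h p by ring.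
    rewrite -/p in H1. lra.
  have := N1_ge0 (Dh p); rewrite hNk in H2; nra.
have [s [hs1 hs2]] : exists s, Rabs s <= eta * t /\ phi s = 0.
  have hle : - (eta * t) < eta * t by nra.
  have hb' : 0 < b i0 \/ b i0 < 0 by move: hb; rewrite /b; lra.
  case: hb' => hb'.
  - have Hbe : be = b i0 by rewrite /be Rabs_right; lra.
    have hp : 0 < eta * t * b i0 by apply: Rmult_lt_0_compat.
    move: e1 e2 hsmall; rewrite Hbe => /Rabs_le_between e1 /Rabs_le_between e2 hsm.
    have [s [hs hs']] := IVT_interv phi (-(eta*t)) (eta*t) hcont hle ltac:(lra) ltac:(lra).
    exists s; split => //; apply: Rabs_le; lra.
  - have Hbe : be = - b i0 by rewrite /be Rabs_left; lra.
    have hp : 0 < eta * t * (- b i0) by apply: Rmult_lt_0_compat; lra.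
    have hcont' : forall a, - (eta * t) <= a <= eta * t -> continuity_pt (fun s => - phi s) a.
      move=> a ha; apply: continuity_pt_opp; exact: hcont.
    move: e1 e2 hsmall; rewrite Hbe => /Rabs_le_between e1 /Rabs_le_between e2 hsm.
    have [s [hs hs']] := IVT_interv (fun s => - phi s) (-(eta*t)) (eta*t) hcont' hle ltac:(lra) ltac:(lra).
    exists s; split; [apply: Rabs_le; lra | lra].
have hGs := hmin _ hs2.
have hv := vnw s hs1.
have := Hdg (w s) ltac:(lra); rewrite dqw => H1.
have H2 := Rabs_le_between H1.
have H3 : s * q i0 <= eta * t * Q.
  apply: Rle_trans (Rle_abs _) _; rewrite Rabs_mult /Q; apply: Rmult_le_compat_r => //.
have H4 : eps' * vnorm (w s) <= eps' * (t * (V + eta)) by apply: Rmult_le_compat_l; lra.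
have H5 : eps' * (t * (V + eta)) < eps' * (t * K).
  apply: Rmult_lt_compat_l => //; apply: Rmult_lt_compat_l => //; rewrite /K; lra.
have H6 : eta * Q < ga / 4.
  have : eta * Q < eta * (Q + 1) by apply: Rmult_lt_compat_l; lra.
  lra.
have H7 : eps' * (t * K) = t * (ga / 4) by nra.
have H8 : eta * t * Q < t * (ga / 4) by nra.
lra.
Qed.

Lemma lagrange (m : nat) (G h : vec m -> R) (Dh : vec m -> vec m) (u0 q : vec m) (r0 : R) (i0 : 'I_m)
  (hr0 : 0 < r0) (hu0 : h u0 = 0) (hmin : forall u, h u = 0 -> G u0 <= G u)
  (hG : has_grad G u0 q) (hh0 : has_grad h u0 (Dh u0))
  (hh : forall w, N1 w < r0 -> has_grad h (vadd u0 w) (Dh (vadd u0 w)))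
  (hb : Dh u0 i0 <> 0) j : q j * Dh u0 i0 = q i0 * Dh u0 j.
Proof.
set b := Dh u0.
set v := fun l => b i0 * ev j l + (- b j) * ev i0 l.
have h1 : dot b v = 0 by rewrite /v dot_lin !dot_ev; ring.
have h2 : dot b (fun l => (-1) * v l + 0 * v l) = 0 by rewrite dot_lin h1; ring.
have := lag_dir hr0 hu0 hmin hG hh0 hh hb h1; have := lag_dir hr0 hu0 hmin hG hh0 hh hb h2; rewrite dot_lin /v dot_lin !dot_ev; lra.
Qed.


Lemma mv_mm q p r (A : mat q p) (B : mat p r) u i : mv A (mv B u) i = mv (mm A B) u i.
Proof.
rewrite /mv /mm.
transitivity (rsum (fun j => rsum (fun l => A i j * B j l * u l))).
  apply: rsum_ext => j; rewrite -rsumZ; apply: rsum_ext => l; ring.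
rewrite rsum_swap; apply: rsum_ext => l; rewrite -rsumZr; apply: rsum_ext => j; ring.
Qed.
Lemma mv_idm n (u : vec n) i : mv (@idm n) u i = u i.
Proof. rewrite /mv /idm -(rsum_delta' u i); apply: rsum_ext => j; ring. Qed.
Lemma mv_lin q p (A : mat q p) (u v t : vec p) c i :
  mv A (fun j => u j + v j + c * t j) i = mv A u i + mv A v i + c * mv A t i.
Proof. rewrite /mv -rsumZ -!rsumD; apply: rsum_ext => j; ring. Qed.
Lemma dot_lin3 n (a u v t : vec n) c :
  dot a (fun j => u j + v j + c * t j) = dot a u + dot a v + c * dot a t.
Proof. rewrite /dot -rsumZ -!rsumD; apply: rsum_ext => j; ring. Qed.
Lemma dot_vm q p (a : vec q) (P : mat q p) (w : vec p) :
  rsum (fun j => vm a P j * w j) = dot a (mv P w).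
Proof.
rewrite /vm /dot /mv.
transitivity (rsum (fun j => rsum (fun l => a l * P l j * w j))).
  apply: rsum_ext => j; rewrite -rsumZr; apply: rsum_ext => l; ring.
rewrite rsum_swap; apply: rsum_ext => l; rewrite -rsumZ; apply: rsum_ext => j; ring.
Qed.

Definition K3 m (D2 P : mat m m) (a : vec m) (Lam : R) := MN P * (INR m * (1 + MN D2 + Lam)) +
   N1 (mv P a) / Rabs (dot a (mv P a)) * (1 + N1 a * (MN P * (INR m * (1 + MN D2 + Lam)))).

Lemma key (n m : nat) (k : vec n) (d : vec m) (B : mat m n) (F D2 P : mat m m) (a : vec m)
  (lam0 lam eps1 Lam : R) (gx g0 hx : vec m)
  (hPH : mm P (fun i j => F i j - lam0 * D2 i j) = @idm m) (hc : dot a (mv P a) <> 0)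
  (hg0 : forall j, g0 j = lam0 * a j) (hgx : forall j, gx j = lam * hx j)
  (r1 : forall j, Rabs (gx j - g0 j - mv B k j - mv F d j) <= eps1 * (N1 k + N1 d))
  (r2 : forall j, Rabs (hx j - a j - mv D2 d j) <= eps1 * N1 d)
  (r3 : Rabs (dot a d) <= eps1 * N1 d)
  (hlam : Rabs (lam - lam0) <= eps1) (hLam : Rabs lam <= Lam) (he1 : 0 <= eps1) :
  N1 (fun i => d i - mv (mm (fun i j => mv P a i * vm a P j / dot a (mv P a) - P i j) B) k i)
    <= eps1 * K3 D2 P a Lam * (N1 k + N1 d).
Proof.
set H : mat m m := fun i j => F i j - lam0 * D2 i j.
set c := dot a (mv P a).
set S := N1 k + N1 d.
set L : mat m n := mm (fun i j => mv P a i * vm a P j / c - P i j) B.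
fold H in hPH. fold c in hc. fold S in r1.
set w := mv B k.
set Dl := lam - lam0.
set e := fun j => w j + mv H d j + (- Dl) * a j.
have hHd : forall j, mv H d j = mv F d j - lam0 * mv D2 d j.
  move=> j; rewrite /mv /H -rsumZ -rsumB; apply: rsum_ext => l; ring.
have hS : 0 <= S by rewrite /S; have := N1_ge0 k; have := N1_ge0 d; lra.
have hNd : N1 d <= S by rewrite /S; have := N1_ge0 k; lra.
have hM := MN_ge0 D2.
have hLam0 : 0 <= Lam by apply: Rle_trans hLam; exact: Rabs_pos.
have he : forall j, Rabs (e j) <= eps1 * (1 + MN D2 + Lam) * S.
  move=> j.
  have -> : e j = - (gx j - g0 j - w j - mv F d j) + Dl * mv D2 d j + lam * (hx j - a j - mv D2 d j).
    by rewrite /e hHd hgx hg0 /Dl; ring.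
  apply: Rle_trans (Rabs_triang _ _) _; apply: Rle_trans (Rplus_le_compat_r _ _ _ (Rabs_triang _ _)) _.
  rewrite Rabs_Ropp !Rabs_mult.
  have h1 : Rabs (gx j - g0 j - w j - mv F d j) <= eps1 * S := r1 j. have h2 := r2 j.
  have h3 : Rabs (mv D2 d j) <= MN D2 * N1 d := abs_mv D2 d j.
  have h4 : Rabs Dl * Rabs (mv D2 d j) <= eps1 * (MN D2 * N1 d).
    apply: Rmult_le_compat => //; exact: Rabs_pos.
  have h5 : Rabs lam * Rabs (hx j - a j - mv D2 d j) <= Lam * (eps1 * N1 d).
    apply: Rmult_le_compat => //; exact: Rabs_pos.
  have h6 : eps1 * (MN D2 * N1 d) <= eps1 * (MN D2 * S).
    apply: Rmult_le_compat_l => //; apply: Rmult_le_compat_l => //.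
  have h7 : Lam * (eps1 * N1 d) <= Lam * (eps1 * S).
    apply: Rmult_le_compat_l => //; apply: Rmult_le_compat_l => //.
  lra.
set E := INR m * (1 + MN D2 + Lam).
have hE : 0 <= E by rewrite /E; apply: Rmult_le_pos; [exact: pos_INR | lra].
have hNe : N1 e <= eps1 * E * S.
  apply: Rle_trans (rsum_le (G := fun _ => eps1 * (1 + MN D2 + Lam) * S) _) _.
    move=> j; exact: he.
  rewrite rsum_const /E; lra.
have hPe : forall i, mv P e i = mv P w i + d i + (- Dl) * mv P a i.
  move=> i; rewrite /e mv_lin mv_mm hPH mv_idm; ring.
have hPe' : dot a (mv P e) = dot a (mv P w) + dot a d + (- Dl) * c.
  have -> : mv P e = fun i => mv P w i + d i + (- Dl) * mv P a i.
    by apply: functional_extensionality => i; exact: hPe.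
  by rewrite dot_lin3.
set s := (dot a d - dot a (mv P e)) / c.
have hr : forall i, d i - mv L k i = mv P e i + s * mv P a i.
  move=> i; rewrite /L -mv_mm -/w.
  have -> : mv (fun i j => mv P a i * vm a P j / c - P i j) w i
            = mv P a i / c * dot a (mv P w) - mv P w i.
    transitivity (rsum (fun j => mv P a i / c * (vm a P j * w j) - P i j * w j)).
      rewrite /mv; apply: rsum_ext => j; field => //.
    by rewrite rsumB rsumZ dot_vm.
  rewrite /s (hPe i).
  replace (dot a (mv P e)) with (dot a (mv P w) + dot a d + - Dl * c) by (symmetry; exact hPe').
  field => //.
rewrite (N1_ext hr).
apply: Rle_trans (N1_tri (u := mv P e) (v := fun i => s * mv P a i) _) _ => //.
rewrite N1_scale.
have hMP := MN_ge0 P.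
have hX : N1 (mv P e) <= MN P * (eps1 * E * S).
  apply: Rle_trans (N1_mv P e) _; apply: Rmult_le_compat_l => //.
have hca : 0 < Rabs c by apply: Rabs_pos_lt.
have hY : Rabs s <= (eps1 * S + N1 a * (MN P * (eps1 * E * S))) / Rabs c.
  rewrite /s /Rdiv Rabs_mult Rabs_inv; apply: Rmult_le_compat_r.
    by apply: Rlt_le; apply: Rinv_0_lt_compat.
  apply: Rle_trans (Rabs_triang _ _) _; rewrite Rabs_Ropp.
  have h1 := abs_dot a (mv P e).
  have h2 : eps1 * N1 d <= eps1 * S by apply: Rmult_le_compat_l.
  have h3 : N1 a * N1 (mv P e) <= N1 a * (MN P * (eps1 * E * S)).
    apply: Rmult_le_compat_l => //; exact: N1_ge0.
  lra.
have hNPa := N1_ge0 (mv P a).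
apply: Rle_trans (Rplus_le_compat _ _ _ _ hX (Rmult_le_compat_r _ _ _ hNPa hY)) _.
right; rewrite /K3 -/c -/E; field; lra.
Qed.


Lemma uncurry_vjoin n m (f : vec n -> vec m -> R) x u : uncurry_vec f (vjoin x u) = f x u.
Proof.
rewrite /uncurry_vec; congr f; apply: functional_extensionality => i;
  by rewrite ?vjoin_l ?vjoin_r.
Qed.
Lemma vjoin_ext n m (x : vec n) (u : vec m) (z : vec (n + m)) :
  (forall i, z (lshift m i) = x i) -> (forall j, z (rshift n j) = u j) -> z = vjoin x u.
Proof.
move=> h1 h2; apply: functional_extensionality => l.
by case: (split_ordP l) => [i ->|j ->]; rewrite ?vjoin_l ?vjoin_r.
Qed.
Lemma vadd_join n m (x k : vec n) (u d : vec m) :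
  vadd (vjoin x u) (vjoin k d) = vjoin (vadd x k) (vadd u d).
Proof. apply: vjoin_ext => i; by rewrite /vadd ?vjoin_l ?vjoin_r. Qed.
Lemma vsub_join n m (x k : vec n) (u d : vec m) :
  vsub (vjoin x u) (vjoin k d) = vjoin (vsub x k) (vsub u d).
Proof. apply: vjoin_ext => i; by rewrite /vsub ?vjoin_l ?vjoin_r. Qed.
Lemma vnorm_join0 n m (k : vec m) : vnorm (vjoin (fun _ : 'I_n => 0) k) = vnorm k.
Proof.
rewrite /vnorm rsum_split; congr sqrt.
rewrite (rsum_ext (G := fun _ => 0)) ?rsum0 => [|i]; last by rewrite vjoin_l; ring.
rewrite Rplus_0_l; apply: rsum_ext => j; by rewrite vjoin_r.
Qed.

Lemma grad_of_bound p (g : vec p -> R) z v :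
  (forall eps, 0 < eps -> exists delta, 0 < delta /\ forall k, vnorm k < delta ->
    Rabs (g (vadd z k) - g z - dot v k) <= eps * vnorm k) -> has_grad g z v.
Proof.
move=> H eps he; have [d [hd Hd]] := H eps he; exists d; split => // k hk.
rewrite (vnorm_ext (v := fun _ : 'I_1 => g (vadd z k) - g z - dot v k)) ?vnorm1 //; exact: Hd.
Qed.

Lemma partial_grad n m (f : vec n -> vec m -> R) x u g :
  has_grad (uncurry_vec f) (vjoin x u) g -> has_grad (f x) u (fun j => g (rshift n j)).
Proof.
move=> H; apply: grad_of_bound => eps he.
have [d [hd Hd]] := grad_bound H he; exists d; split => // k hk.
set K := vjoin (fun _ : 'I_n => 0) k.
have hK : vnorm K = vnorm k by exact: vnorm_join0.
have := Hd K ltac:(lra).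
rewrite hK /K vadd_join !uncurry_vjoin.
have -> : vadd x (fun _ => 0) = x by apply: functional_extensionality => i; rewrite /vadd; ring.
have -> : dot g (vjoin (fun _ : 'I_n => 0) k) = dot (fun j => g (rshift n j)) k.
  rewrite /dot rsum_split (rsum_ext (G := fun _ => 0)) ?rsum0 => [|i]; last by rewrite vjoin_l; ring.
  rewrite Rplus_0_l; apply: rsum_ext => j; by rewrite vjoin_r.
done.
Qed.

Lemma mv_join q n m (A : mat q (n + m)) (k : vec n) (d : vec m) l :
  mv A (vjoin k d) l = mv (fun i j => A i (lshift m j)) k l + mv (fun i j => A i (rshift n j)) d l.
Proof.
rewrite /mv rsum_split; congr (_ + _); apply: rsum_ext => i; by rewrite ?vjoin_l ?vjoin_r.
Qed.
Lemma vdist_refl n (z : vec n) : vdist z z = 0.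
Proof.
rewrite /vdist /vnorm (rsum_ext (G := fun _ => 0)) ?rsum0 ?sqrt_0 // => i; rewrite /vsub; ring.
Qed.
Lemma vdist_add n (z w : vec n) : vdist (vadd z w) z = vnorm w.
Proof. by rewrite /vdist vadd_vsub. Qed.
Lemma N1_join_le n m (k : vec n) (d : vec m) : vnorm (vjoin k d) <= N1 k + N1 d.
Proof. rewrite -N1_join; exact: vnorm_le_N1. Qed.
Lemma small_INR n X : 0 < X -> forall v : vec n, vnorm v < X / (2 * (INR n + 1)) -> N1 v < X / 2.
Proof.
move=> hX v hv; have hn := pos_INR n.
have h1 := N1_le_vnorm v.
have h2 : X / (2 * (INR n + 1)) * (2 * (INR n + 1)) = X by field; lra.
have h3 : INR n * vnorm v <= INR n * (X / (2 * (INR n + 1))).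
  by apply: Rmult_le_compat_l => //; lra.
have h4 : 0 < X / (2 * (INR n + 1)) by apply: Rdiv_lt_0_compat; lra.
nra.
Qed.

Unset Implicit Arguments. Set Strict Implicit.

Theorem corollary1 (n m : nat) (f : vec n -> vec m -> R) (h : vec m -> R)
    (U : vec n -> Prop) (y : vec n -> vec m) (x0 : vec n)
    (Df : vec (n + m) -> vec (n + m)) (D2f : vec (n + m) -> mat (n + m) (n + m))
    (Dh : vec m -> vec m) (D2h : vec m -> mat m m)
    (i0 : 'I_m) (Hinv : mat m m) :
  is_open U ->
  (forall x, U x -> is_constrained_argmin f h x (y x)) ->
  U x0 ->
  C2_near_with (uncurry_vec f) Df D2f (vjoin x0 (y x0)) ->
  C2_near_with h Dh D2h (y x0) ->
  cont_at y x0 ->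
  (exists i, Dh (y x0) i <> 0) ->
  Dh (y x0) i0 <> 0 ->
  let z0 := vjoin x0 (y x0) in
  let a : vec m := Dh (y x0) in
  let B : mat m n := fun i j => D2f z0 (rshift n i) (lshift m j) in
  let lam := / Dh (y x0) i0 * Df z0 (rshift n i0) in
  let H : mat m m := fun i j => D2f z0 (rshift n i) (rshift n j) - lam * D2h (y x0) i j in
  is_inverse H Hinv ->
  dot a (mv Hinv a) <> 0 ->
  has_deriv y x0
    (mm (fun i j => mv Hinv a i * vm a Hinv j / dot a (mv Hinv a) - Hinv i j) B).
Proof.
move=> hU hmin hUx0 [rf [hrf hfC]] [rh [hrh hhC]] hy _ hi0 z0 a B lam H [_ hPH] hc.
set y0 := y x0.
set Fm : mat m m := fun i j => D2f z0 (rshift n i) (rshift n j).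
set D2 := D2h y0.
set L := mm (fun i j => mv Hinv a i * vm a Hinv j / dot a (mv Hinv a) - Hinv i j) B.
have [hgf0 [hdf0 _]] := hfC z0 ltac:(rewrite vdist_refl; lra).
have [hgh0 [hdh0 _]] := hhC y0 ltac:(rewrite vdist_refl; lra).
have [hy0 hmin0] := hmin x0 hUx0.
have hh_near : forall u, N1 (vsub u y0) < rh -> has_grad h u (Dh u).
  move=> u hu; have [? _] := hhC u ltac:(apply: Rle_lt_trans (vnorm_le_N1 _) hu); done.
set g0 : vec m := fun j => Df z0 (rshift n j).
have lag0 : forall j, g0 j * a i0 = g0 i0 * a j.
  apply: (@lagrange m (f x0) h Dh y0 g0 rh i0 hrh hy0 hmin0) => //.
  - rewrite /g0 /z0; apply: partial_grad; exact: hgf0.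
  - move=> w hw; apply: hh_near; rewrite vadd_vsub //.
have hg0 : forall j, g0 j = lam * a j.
  move=> j; rewrite /lam -/y0 -/a; have := lag0 j; rewrite -/(g0 i0) => e.
  field_simplify_eq => //; lra.
set be := Rabs (a i0).
have hbe : 0 < be by apply: Rabs_pos_lt.
set M := MN D2. have hM : 0 <= M := MN_ge0 D2.
have hMB := MN_ge0 B. have hMF := MN_ge0 Fm.
set C0 := MN B + MN Fm + M + 1.
have hC0 : 0 < C0 by rewrite /C0; lra.
set G0 := Rabs (g0 i0). have hG0 : 0 <= G0 := Rabs_pos _.
set Lam := 2 * (G0 + be) / be.
have hLam : 0 < Lam by rewrite /Lam; apply: Rdiv_lt_0_compat; lra.
set K := K3 D2 Hinv a Lam + 1.
have hK3 : 0 <= K3 D2 Hinv a Lam.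
  rewrite /K3; have h1 := MN_ge0 Hinv; have h2 := N1_ge0 (mv Hinv a); have h3 := N1_ge0 a;
  have h4 := pos_INR m; have h5 := Rabs_pos_lt _ hc; have h6 := MN_ge0 D2.
  have h7 : 0 <= INR m * (1 + MN D2 + Lam) by apply: Rmult_le_pos; lra.
  apply: Rplus_le_le_0_compat; first by apply: Rmult_le_pos.
  apply: Rmult_le_pos; first by apply: Rmult_le_pos => //; apply: Rlt_le; apply: Rinv_0_lt_compat.
  apply: Rplus_le_le_0_compat; first lra.
  apply: Rmult_le_pos => //; apply: Rmult_le_pos => //.
have hK : 0 < K by rewrite /K; lra.
set ML := MN L. have hML : 0 <= ML := MN_ge0 L.
have hn := pos_INR n.
move=> eps he.
set eps1 := Rmin 1 (Rmin (/ (2 * K)) (eps / (K * (2 * ML + 2) * (INR n + 1)))).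
have he1 : 0 < eps1.
  rewrite /eps1; apply: Rmin_pos; first lra; apply: Rmin_pos.
    apply: Rinv_0_lt_compat; lra.
  apply: Rdiv_lt_0_compat => //; apply: Rmult_lt_0_compat; [apply: Rmult_lt_0_compat|]; lra.
have he1a : eps1 <= 1 by apply: Rmin_l.
have he1b : eps1 <= / (2 * K) by apply: Rle_trans (Rmin_r _ _) (Rmin_l _ _).
have he1c : eps1 <= eps / (K * (2 * ML + 2) * (INR n + 1)) by apply: Rle_trans (Rmin_r _ _) (Rmin_r _ _).
have [d1 [hd1 Hd1]] := deriv_bound hdf0 he1.
have [d2 [hd2 Hd2]] := deriv_bound hdh0 he1.
have [d3 [hd3 Hd3]] := grad_bound hgh0 he1.
set tau := Rmin (be / (2 * C0)) (eps1 * be / ((Lam + 1) * C0)).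
have htau : 0 < tau.
  rewrite /tau; apply: Rmin_pos; apply: Rdiv_lt_0_compat; try nra.
have htau1 : tau * C0 <= be / 2.
  have := Rmin_l (be / (2 * C0)) (eps1 * be / ((Lam + 1) * C0)); rewrite -/tau => h1.
  have : be / (2 * C0) * C0 = be / 2 by field; lra.
  nra.
have htau2 : tau * ((Lam + 1) * C0) <= eps1 * be.
  have := Rmin_r (be / (2 * C0)) (eps1 * be / ((Lam + 1) * C0)); rewrite -/tau => h1.
  have : eps1 * be / ((Lam + 1) * C0) * ((Lam + 1) * C0) = eps1 * be by field; lra.
  have : 0 < (Lam + 1) * C0 by nra.
  nra.
set sig := Rmin (Rmin d1 (Rmin d2 d3)) (Rmin (Rmin rf (rh / 2)) tau).
have hsig : 0 < sig.
  rewrite /sig; repeat apply: Rmin_pos => //; lra.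
have [hs1 [hs2 [hs3 [hs4 [hs5 hs6]]]]] : sig <= d1 /\ sig <= d2 /\ sig <= d3 /\ sig <= rf /\ sig <= rh / 2 /\ sig <= tau.
  rewrite /sig.
  have := Rmin_l (Rmin d1 (Rmin d2 d3)) (Rmin (Rmin rf (rh / 2)) tau).
  have := Rmin_r (Rmin d1 (Rmin d2 d3)) (Rmin (Rmin rf (rh / 2)) tau).
  have := Rmin_l d1 (Rmin d2 d3). have := Rmin_r d1 (Rmin d2 d3).
  have := Rmin_l d2 d3. have := Rmin_r d2 d3.
  have := Rmin_l (Rmin rf (rh / 2)) tau. have := Rmin_r (Rmin rf (rh / 2)) tau.
  have := Rmin_l rf (rh / 2). have := Rmin_r rf (rh / 2).
  lra.
have hm := pos_INR m.
have hsy : 0 < sig / (2 * (INR m + 1)) by apply: Rdiv_lt_0_compat; lra.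
have [dy [hdy Hdy]] := hy _ hsy.
have [rU [hrU HrU]] := hU x0 hUx0.
set sk := sig / (2 * (INR n + 1)).
have hsk : 0 < sk by apply: Rdiv_lt_0_compat; lra.
exists (Rmin rU (Rmin dy sk)); split.
  by repeat apply: Rmin_pos.
move=> k hk.
have [hk1 [hk2 hk3]] : vnorm k < rU /\ vnorm k < dy /\ vnorm k < sk.
  have := Rmin_l rU (Rmin dy sk). have := Rmin_r rU (Rmin dy sk).
  have := Rmin_l dy sk. have := Rmin_r dy sk. lra.
set x := vadd x0 k.
have hUx : U x by apply: HrU; rewrite /x vdist_add.
have [hyx hminx] := hmin x hUx.
set d := vsub (y x) y0.
have hyd : y x = vadd y0 d.
  by apply: functional_extensionality => i; rewrite /vadd /d /vsub; ring.
have hNd : N1 d < sig / 2.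
  apply: (small_INR hsig); exact: Hdy x ltac:(rewrite /x vdist_add //).
have hNk : N1 k < sig / 2 by apply: (small_INR hsig).
set S := N1 k + N1 d.
have hSdef : S = N1 k + N1 d by [].
have hS : S < sig by rewrite /S; lra.
have hS0 : 0 <= S by rewrite /S; have := N1_ge0 k; have := N1_ge0 d; lra.
have hNd0 := N1_ge0 d. have hNk0 := N1_ge0 k.
set zx := vjoin x (y x).
set Kv := vjoin k d.
have hzx : zx = vadd z0 Kv by rewrite /zx /z0 /Kv vadd_join -hyd.
have hKv : vnorm Kv <= S by exact: N1_join_le.
have hvd : vnorm d <= N1 d := vnorm_le_N1 d.
set gx : vec m := fun j => Df zx (rshift n j).
set hx := Dh (y x).
have T1 : forall j, Rabs (gx j - g0 j - mv B k j - mv Fm d j) <= eps1 * S.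
  move=> j; have := Hd1 Kv ltac:(lra) (rshift n j); rewrite -hzx mv_join.
  move=> h1.
  have e1 : mv (fun i l => D2f z0 i (lshift m l)) k (rshift n j) = mv B k j by [].
  have e2 : mv (fun i l => D2f z0 i (rshift n l)) d (rshift n j) = mv Fm d j by [].
  rewrite e1 e2 in h1.
  have -> : gx j - g0 j - mv B k j - mv Fm d j = Df zx (rshift n j) - Df z0 (rshift n j) - (mv B k j + mv Fm d j).
    by rewrite /gx /g0; ring.
  apply: Rle_trans h1 _; apply: Rmult_le_compat_l; lra.
have T2 : forall j, Rabs (hx j - a j - mv D2 d j) <= eps1 * N1 d.
  move=> j; have := Hd2 d ltac:(lra) j; rewrite -hyd.
  move=> h1; apply: Rle_trans h1 _; apply: Rmult_le_compat_l; lra.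
have T3 : Rabs (dot a d) <= eps1 * N1 d.
  have := Hd3 d ltac:(lra); rewrite -hyd hyx hy0.
  have -> : 0 - 0 - dot a d = - dot a d by ring.
  rewrite Rabs_Ropp => h1; apply: Rle_trans h1 _; apply: Rmult_le_compat_l; lra.
have hSt : S * C0 <= be / 2.
  have : S * C0 <= tau * C0 by apply: Rmult_le_compat_r; lra.
  lra.
have B1 : Rabs (hx i0 - a i0) <= C0 * S.
  have h1 := T2 i0. have h2 := abs_mv D2 d i0.
  have := Rabs_triang (hx i0 - a i0 - mv D2 d i0) (mv D2 d i0).
  have -> : hx i0 - a i0 - mv D2 d i0 + mv D2 d i0 = hx i0 - a i0 by ring.
  have h3 : eps1 * N1 d <= N1 d by nra.
  have h4 : M * N1 d <= M * S by apply: Rmult_le_compat_l; lra.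
  rewrite /C0 -/M in h2 *.
  have : (MN B + MN Fm) * S >= 0 by apply: Rle_ge; apply: Rmult_le_pos; lra.
  nra.
have B2 : Rabs (gx i0 - g0 i0) <= C0 * S.
  have h1 := T1 i0. have h2 := abs_mv B k i0. have h3 := abs_mv Fm d i0.
  have := Rabs_triang (gx i0 - g0 i0 - mv B k i0 - mv Fm d i0) (mv B k i0 + mv Fm d i0).
  have -> : gx i0 - g0 i0 - mv B k i0 - mv Fm d i0 + (mv B k i0 + mv Fm d i0) = gx i0 - g0 i0 by ring.
  have := Rabs_triang (mv B k i0) (mv Fm d i0).
  have h4 : eps1 * S <= S by nra.
  have h5 : MN B * N1 k <= MN B * S by apply: Rmult_le_compat_l; lra.
  have h6 : MN Fm * N1 d <= MN Fm * S by apply: Rmult_le_compat_l; lra.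
  have : M * S >= 0 by apply: Rle_ge; apply: Rmult_le_pos; lra.
  rewrite /C0; nra.
have hbe' : be = Rabs (a i0) by [].
have hhx : be / 2 <= Rabs (hx i0).
  have := Rabs_triang_inv (a i0) (a i0 - hx i0).
  have -> : a i0 - (a i0 - hx i0) = hx i0 by ring.
  rewrite -Rabs_Ropp Ropp_minus_distr in B1.
  have : C0 * S = S * C0 by ring.
  lra.
have hhx0 : hx i0 <> 0.
  move=> e; rewrite e Rabs_R0 in hhx; lra.
have lagx : forall j, gx j * hx i0 = gx i0 * hx j.
  apply: (@lagrange m (f x) h Dh (y x) gx (rh / 2) i0 ltac:(lra) hyx hminx) => //.
  - rewrite /gx /zx; apply: partial_grad.
    have [? _] := hfC zx ltac:(rewrite hzx vdist_add; lra); done.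
  - apply: hh_near; rewrite -/d; lra.
  - move=> w hw; apply: hh_near.
    apply: Rle_lt_trans (N1_tri (u := w) (v := d) _) _; first by move=> i; rewrite /vadd /d /vsub; ring.
    lra.
set lamx := gx i0 / hx i0.
have hgx : forall j, gx j = lamx * hx j.
  move=> j; rewrite /lamx; have := lagx j => e; field_simplify_eq => //; lra.
have hlamx : Rabs lamx <= Lam.
  have e1 : Rabs lamx * Rabs (hx i0) = Rabs (gx i0) by rewrite -Rabs_mult -hgx.
  have e2 : Rabs (gx i0) <= G0 + be / 2.
    have := Rabs_triang (gx i0 - g0 i0) (g0 i0).
    have -> : gx i0 - g0 i0 + g0 i0 = gx i0 by ring.
    have : C0 * S = S * C0 by ring. rewrite /G0; lra.
  have e3 : Rabs lamx * (be / 2) <= G0 + be / 2.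
    have : Rabs lamx * (be / 2) <= Rabs lamx * Rabs (hx i0) by apply: Rmult_le_compat_l => //; exact: Rabs_pos.
    lra.
  have e4 : Lam * (be / 2) = G0 + be by rewrite /Lam; field; lra.
  have : Rabs lamx * (be / 2) <= Lam * (be / 2) by lra.
  move=> e5; apply: (Rmult_le_reg_r (be / 2)) => //; lra.
have hdl : Rabs (lamx - lam) <= eps1.
  have e1 : (lamx - lam) * a i0 = lamx * (a i0 - hx i0) + (gx i0 - g0 i0).
    rewrite hgx hg0; ring.
  have e2 : Rabs (lamx - lam) * be <= Lam * (C0 * S) + C0 * S.
    rewrite hbe' -Rabs_mult e1; apply: Rle_trans (Rabs_triang _ _) _; rewrite Rabs_mult.
    have : Rabs lamx * Rabs (a i0 - hx i0) <= Lam * (C0 * S).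
      apply: Rmult_le_compat => //; try exact: Rabs_pos.
      by rewrite -Rabs_Ropp Ropp_minus_distr.
    lra.
  have e3 : (Lam + 1) * (C0 * S) <= eps1 * be.
    have : S * ((Lam + 1) * C0) <= tau * ((Lam + 1) * C0).
      apply: Rmult_le_compat_r; [nra | lra].
    nra.
  apply: (Rmult_le_reg_r be) => //; lra.
have hkey := @key n m k d B Fm D2 Hinv a lam lamx eps1 Lam gx g0 hx hPH hc hg0 hgx T1 T2 T3 hdl hlamx (Rlt_le _ _ he1).
rewrite -/L -/S in hkey.
set r := fun i => d i - mv L k i.
have hr : N1 r <= eps1 * K * S.
  apply: Rle_trans hkey _; apply: Rmult_le_compat_r => //; apply: Rmult_le_compat_l; rewrite /K; lra.
have heK : eps1 * K <= / 2.
  have : eps1 * K <= / (2 * K) * K by apply: Rmult_le_compat_r; lra.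
  have : / (2 * K) * K = / 2 by field; lra.
  lra.
have hd : N1 d <= ML * N1 k + eps1 * K * S.
  apply: Rle_trans (N1_tri (u := mv L k) (v := r) _) _; first by move=> i; rewrite /r; ring.
  have := N1_mv L k; rewrite -/ML; lra.
have heKS : eps1 * K * S <= S / 2.
  have : eps1 * K * S <= / 2 * S by apply: Rmult_le_compat_r.
  lra.
have hS2 : S <= (2 * ML + 2) * N1 k by lra.
have hNkv := N1_le_vnorm k.
have hvk := vnorm_ge0 k.
have hS3 : S <= (2 * ML + 2) * (INR n + 1) * vnorm k.
  apply: Rle_trans hS2 _.
  have : N1 k <= (INR n + 1) * vnorm k by nra.
  move=> h1; have : (2 * ML + 2) * N1 k <= (2 * ML + 2) * ((INR n + 1) * vnorm k).
    by apply: Rmult_le_compat_l; lra.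
  lra.
have hfin : eps1 * K * S <= eps * vnorm k.
  have hp : 0 < K * (2 * ML + 2) * (INR n + 1) by apply: Rmult_lt_0_compat; [apply: Rmult_lt_0_compat|]; lra.
  have h1 : eps1 * K * S <= eps1 * K * ((2 * ML + 2) * (INR n + 1) * vnorm k).
    apply: Rmult_le_compat_l => //; apply: Rmult_le_pos; lra.
  have h2 : eps1 * (K * (2 * ML + 2) * (INR n + 1)) <= eps.
    have : eps1 * (K * (2 * ML + 2) * (INR n + 1)) <= eps / (K * (2 * ML + 2) * (INR n + 1)) * (K * (2 * ML + 2) * (INR n + 1)).
      by apply: Rmult_le_compat_r; lra.
    have : eps / (K * (2 * ML + 2) * (INR n + 1)) * (K * (2 * ML + 2) * (INR n + 1)) = eps by field; lra.
    lra.
  have h3 : eps1 * (K * (2 * ML + 2) * (INR n + 1)) * vnorm k <= eps * vnorm k.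
    by apply: Rmult_le_compat_r.
  have : eps1 * K * ((2 * ML + 2) * (INR n + 1) * vnorm k) = eps1 * (K * (2 * ML + 2) * (INR n + 1)) * vnorm k by ring.
  lra.
apply: Rle_trans (vnorm_le_N1 _) _.
have -> : N1 (vsub d (mv L k)) = N1 r by [].
lra.
Qed.
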